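(* Let $\mathbf{A}\in V(\mathsf{BCA})$. Put $O(\mathbf{A})=\{a\in A:J_2a=a\}$ and $D(\mathbf{A})=\{a\in A:J_2a=0\}$. For $a\in A$: (1) $a\in O(\mathbf{A})$ iff $a=J_2b$ for some $b\in A$; (2) $a\in D(\mathbf{A})$ iff $a=b\wedge\neg b$ for some $b\in A$. Moreover: (3) $O(\mathbf{A})$ is the universe of a subalgebra $\mathbf{O}(\mathbf{A})$ of $\mathbf{A}$ whose $\{\wedge,\vee,\neg,0,1\}$-reduct is a Boolean algebra; (4) $D(\mathbf{A})$ is the universe of a semilattice $\mathbf{D}(\mathbf{A})$ which is isomorphic to a quotient of $\mathbf{A}$. Here $D(\mathbf{A})$ contains $0$ and is closed under $\vee$ and $J_2$, and $\neg$ is set to be the identity on it.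
   Context: $\mathbf{WK}^e$ is the three-element algebra on $\{0,\tfrac12,1\}$ of type $\langle\wedge,\vee,\neg,J_2,0,1\rangle$. Its operations are: - $\neg$ swaps $0,1$ and fixes $\tfrac12$; - $\wedge,\vee$ are Boolean on $\{0,1\}$ and return $\tfrac12$ if some argument is $\tfrac12$; - $J_2(1)=1$ and $J_2(\tfrac12)=J_2(0)=0$. $\mathsf{BCA}=ISP(\mathbf{WK}^e)$ and $V(\mathsf{BCA})=HSP(\mathbf{WK}^e)$. A semilattice (in this type) is a member of $V(\mathsf{BCA})$ satisfying $\neg x\approx x$. Equivalently, its $\vee$ and $\wedge$ coincide, giving a join-semilattice with zero $0=1$, and $J_2$ is constantly $0$. *)

(* Defs.v *)
Record alg := Alg {
  car :> Type;
  meet : car -> car -> car;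
  join : car -> car -> car;
  neg  : car -> car;
  j2   : car -> car;
  zero : car;
  one  : car }.

Inductive wk := W0 | Wh | W1.

Definition wk_neg (x : wk) : wk :=
  match x with W0 => W1 | Wh => Wh | W1 => W0 end.
Definition wk_meet (x y : wk) : wk :=
  match x, y with
  | Wh, _ | _, Wh => Wh
  | W1, W1 => W1
  | _, _ => W0 end.
Definition wk_join (x y : wk) : wk :=
  match x, y with
  | Wh, _ | _, Wh => Wh
  | W0, W0 => W0
  | _, _ => W1 end.
Definition wk_j2 (x : wk) : wk :=
  match x with W1 => W1 | _ => W0 end.

Definition WKe : alg := Alg wk wk_meet wk_join wk_neg wk_j2 W0 W1.

Definition power (I : Type) : alg :=
  Alg (I -> wk)
      (fun x y i => wk_meet (x i) (y i))
      (fun x y i => wk_join (x i) (y i))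
      (fun x i => wk_neg (x i))
      (fun x i => wk_j2 (x i))
      (fun _ => W0) (fun _ => W1).

Definition subuniverse (A : alg) (S : A -> Prop) : Prop :=
  S (zero A) /\ S (one A) /\
  (forall x y, S x -> S y -> S (meet A x y)) /\
  (forall x y, S x -> S y -> S (join A x y)) /\
  (forall x, S x -> S (neg A x)) /\
  (forall x, S x -> S (j2 A x)).

Definition hom_on (A B : alg) (S : A -> Prop) (h : A -> B) : Prop :=
  h (zero A) = zero B /\ h (one A) = one B /\
  (forall x y, S x -> S y -> h (meet A x y) = meet B (h x) (h y)) /\
  (forall x y, S x -> S y -> h (join A x y) = join B (h x) (h y)) /\
  (forall x, S x -> h (neg A x) = neg B (h x)) /\
  (forall x, S x -> h (j2 A x) = j2 B (h x)).

Definition is_hom (A B : alg) (h : A -> B) : Prop := hom_on A B (fun _ => True) h.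

(** B is in V(BCA) = HSP(WK^e): a homomorphic image of a subalgebra of a
    direct power of WK^e. *)
Definition in_V (B : alg) : Prop :=
  exists (I : Type) (S : power I -> Prop) (h : power I -> B),
    subuniverse (power I) S /\ hom_on (power I) B S h /\
    (forall b : B, exists x, S x /\ h x = b).

Definition congruence (A : alg) (th : A -> A -> Prop) : Prop :=
  (forall x, th x x) /\ (forall x y, th x y -> th y x) /\
  (forall x y z, th x y -> th y z -> th x z) /\
  (forall x x' y y', th x x' -> th y y' -> th (meet A x y) (meet A x' y')) /\
  (forall x x' y y', th x x' -> th y y' -> th (join A x y) (join A x' y')) /\
  (forall x x', th x x' -> th (neg A x) (neg A x')) /\
  (forall x x', th x x' -> th (j2 A x) (j2 A x')).

(** B is isomorphic to the quotient A/th: there is a surjective homomorphism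
    A -> B whose kernel is exactly th (so the induced map A/th -> B is an
    isomorphism). *)
Definition iso_to_quotient (A B : alg) (th : A -> A -> Prop) : Prop :=
  exists f : A -> B, is_hom A B f /\ (forall b : B, exists a, f a = b) /\
    (forall x y, th x y <-> f x = f y).

Definition is_semilattice (B : alg) : Prop :=
  in_V B /\ forall x : B, neg B x = x.

Definition boolean_reduct (B : alg) : Prop :=
  forall x y z : B,
    meet B x y = meet B y x /\ join B x y = join B y x /\
    meet B x (meet B y z) = meet B (meet B x y) z /\
    join B x (join B y z) = join B (join B x y) z /\
    meet B x (join B x y) = x /\ join B x (meet B x y) = x /\
    meet B x (join B y z) = join B (meet B x y) (meet B x z) /\
    join B x (meet B y z) = meet B (join B x y) (join B x z) /\
    join B x (zero B) = x /\ meet B x (one B) = x /\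
    meet B x (neg B x) = zero B /\ join B x (neg B x) = one B.

Definition Oset (A : alg) (a : A) : Prop := j2 A a = a.
Definition Dset (A : alg) (a : A) : Prop := j2 A a = zero A.

Definition O_alg (A : alg) (H : subuniverse A (Oset A)) : alg :=
  match H with
  | conj h0 (conj h1 (conj hm (conj hj (conj hn hJ)))) =>
    Alg {a : A | Oset A a}
      (fun x y => exist _ (meet A (proj1_sig x) (proj1_sig y))
                    (hm _ _ (proj2_sig x) (proj2_sig y)))
      (fun x y => exist _ (join A (proj1_sig x) (proj1_sig y))
                    (hj _ _ (proj2_sig x) (proj2_sig y)))
      (fun x => exist _ (neg A (proj1_sig x)) (hn _ (proj2_sig x)))
      (fun x => exist _ (j2 A (proj1_sig x)) (hJ _ (proj2_sig x)))
      (exist _ (zero A) h0) (exist _ (one A) h1)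
  end.

Definition D_closed (A : alg) : Prop :=
  Dset A (zero A) /\
  (forall x y, Dset A x -> Dset A y -> Dset A (meet A x y)) /\
  (forall x y, Dset A x -> Dset A y -> Dset A (join A x y)) /\
  (forall x, Dset A x -> Dset A (j2 A x)).

(** The algebra D(A): meet, join, J2 inherited from A, neg := identity,
    and both constants 0 and 1 interpreted as 0 of A (in a semilattice 0 = 1). *)
Definition D_alg (A : alg) (H : D_closed A) : alg :=
  match H with
  | conj h0 (conj hm (conj hj hJ)) =>
    Alg {a : A | Dset A a}
      (fun x y => exist _ (meet A (proj1_sig x) (proj1_sig y))
                    (hm _ _ (proj2_sig x) (proj2_sig y)))
      (fun x y => exist _ (join A (proj1_sig x) (proj1_sig y))
                    (hj _ _ (proj2_sig x) (proj2_sig y)))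
      (fun x => x)
      (fun x => exist _ (j2 A (proj1_sig x)) (hJ _ (proj2_sig x)))
      (exist _ (zero A) h0) (exist _ (zero A) h0)
  end.

(* Main.v *)
Require Import Defs.
From Stdlib Require Import Setoid FunctionalExtensionality ProofIrrelevance.

Definition rep (A : alg) (I : Type) (S : power I -> Prop) (h : power I -> A) : Prop :=
  subuniverse (power I) S /\ hom_on (power I) A S h /\
  (forall b : A, exists x, S x /\ h x = b).

Set Implicit Arguments.

Lemma in_V_rep A : in_V A -> exists I S h, rep A I S h.
Proof. intros (I & S & h & H1 & H2 & H3). exists I, S, h. split; auto. Qed.

Ltac solveid R :=
  let S0 := fresh "S0" in let S1 := fresh "S1" in let Sm := fresh "Sm" in
  let Sj := fresh "Sj" in let Sn := fresh "Sn" in let SJ := fresh "SJ" in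
  let H0 := fresh "H0" in let H1 := fresh "H1" in let Hm := fresh "Hm" in
  let Hj := fresh "Hj" in let Hn := fresh "Hn" in let HJ := fresh "HJ" in
  let Hs := fresh "Hs" in
  lazymatch type of R with rep _ _ _ ?h =>
  destruct R as [[S0 [S1 [Sm [Sj [Sn SJ]]]]] [[H0 [H1 [Hm [Hj [Hn HJ]]]]] Hs]];
  repeat match goal with
  | a : car ?A |- _ =>
      let xa := fresh "x" in let Sxa := fresh "Sx" in
      destruct (Hs a) as [xa [Sxa <-]]
  end;
  repeat split;
  rewrite <- ?H0, <- ?H1;
  repeat match goal with
  | |- context [meet _ (h ?x) (h ?y)] =>
      rewrite <- (Hm x y) by (solve [repeat (first [assumption | apply Sm | apply Sj | apply Sn | apply SJ])])
  | |- context [join _ (h ?x) (h ?y)] =>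
      rewrite <- (Hj x y) by (solve [repeat (first [assumption | apply Sm | apply Sj | apply Sn | apply SJ])])
  | |- context [neg _ (h ?x)] =>
      rewrite <- (Hn x) by (solve [repeat (first [assumption | apply Sm | apply Sj | apply Sn | apply SJ])])
  | |- context [j2 _ (h ?x)] =>
      rewrite <- (HJ x) by (solve [repeat (first [assumption | apply Sm | apply Sj | apply Sn | apply SJ])])
  end;
  apply (f_equal h); apply functional_extensionality; let i := fresh "i" in intro i; cbn;
  repeat (match goal with |- context [?x i] => is_var x; destruct (x i) end);
  reflexivity end.

Section Ids.
Local Ltac T := let R := fresh "R" in intros R; intros; solveid R.

Lemma I1 A I S h : rep A I S h -> forall a : A, j2 A (j2 A a) = j2 A a.
Proof. T. Qed.
Lemma I2 A I S h : rep A I S h -> forall a : A, a = join A (meet A a (neg A a)) (j2 A a).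
Proof. T. Qed.
Lemma I3 A I S h : rep A I S h -> forall a : A, join A a (zero A) = a.
Proof. T. Qed.
Lemma I4 A I S h : rep A I S h -> forall a : A, j2 A (meet A a (neg A a)) = zero A.
Proof. T. Qed.
Lemma I5 A I S h : rep A I S h -> j2 A (zero A) = zero A /\ j2 A (one A) = one A.
Proof. T. Qed.
Lemma I6 A I S h : rep A I S h -> forall a b : A,
  j2 A (meet A (j2 A a) (j2 A b)) = meet A (j2 A a) (j2 A b) /\
  j2 A (join A (j2 A a) (j2 A b)) = join A (j2 A a) (j2 A b) /\
  j2 A (neg A (j2 A a)) = neg A (j2 A a).
Proof. T. Qed.
Lemma Ibool A I S h : rep A I S h -> forall x y z : A,
  let x := j2 A x in let y := j2 A y in let z := j2 A z in
    meet A x y = meet A y x /\ join A x y = join A y x /\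
    meet A x (meet A y z) = meet A (meet A x y) z /\
    join A x (join A y z) = join A (join A x y) z /\
    meet A x (join A x y) = x /\ join A x (meet A x y) = x /\
    meet A x (join A y z) = join A (meet A x y) (meet A x z) /\
    join A x (meet A y z) = meet A (join A x y) (join A x z) /\
    join A x (zero A) = x /\ meet A x (one A) = x /\
    meet A x (neg A x) = zero A /\ join A x (neg A x) = one A.
Proof. intros R x y z; cbv zeta. solveid R. Qed.
Lemma If A I S h : rep A I S h -> forall x y : A,
  meet A (zero A) (neg A (zero A)) = zero A /\
  meet A (one A) (neg A (one A)) = zero A /\
  meet A (meet A x y) (neg A (meet A x y)) = meet A (meet A x (neg A x)) (meet A y (neg A y)) /\
  meet A (join A x y) (neg A (join A x y)) = join A (meet A x (neg A x)) (meet A y (neg A y)) /\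
  meet A (neg A x) (neg A (neg A x)) = meet A x (neg A x) /\
  meet A (j2 A x) (neg A (j2 A x)) = j2 A (meet A x (neg A x)).
Proof. T. Qed.
Lemma ID A I S h : rep A I S h -> forall x y : A,
  j2 A (meet A (meet A x (neg A x)) (meet A y (neg A y))) = zero A /\
  j2 A (join A (meet A x (neg A x)) (meet A y (neg A y))) = zero A.
Proof. T. Qed.
End Ids.

Lemma sig_eq (T : Type) (P : T -> Prop) a b pa pb : a = b -> exist P a pa = exist P b pb.
Proof. intros ->. f_equal. apply proof_irrelevance. Qed.

Lemma part2 A I S h : rep A I S h -> forall a : A, Dset A a -> meet A a (neg A a) = a.
Proof.
  intros R a Ha. unfold Dset in Ha.
  rewrite (I2 R a) at 3. rewrite Ha. symmetry. apply (I3 R).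
Qed.

Lemma partD A I S h (R : rep A I S h) (HD : D_closed A) :
  is_semilattice (D_alg A HD) /\
     exists th : A -> A -> Prop,
       congruence A th /\ iso_to_quotient A (D_alg A HD) th.
Proof.
  destruct HD as [h0 [hm [hj hJ]]]. simpl.
  set (f := fun a : A => exist (Dset A) (meet A a (neg A a)) (I4 R a)
     : {a : A | Dset A a}).
  set (B := {| car := {a : A | Dset A a}; meet := _; join := _; neg := _; j2 := _;
               zero := _; one := _ |}).
  assert (Hf : is_hom A B f).
  { destruct (If R (zero A) (zero A)) as (e1 & e2 & _).
    repeat split; intros; apply sig_eq; simpl; try assumption;
    first [apply (If R x x) | apply (If R x y)]. }
  assert (Hsurj : forall b : B, exists a, f a = b).
  { intros [v p]. exists v. apply sig_eq. apply (part2 R p). }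
  destruct Hf as [F0 [F1 [Fm [Fj [Fn FJ]]]]].
  split; [split|].
  - destruct R as [HS [[H0 [H1 [Hm [Hj [Hn HJ]]]]] Hs]].
    exists I, S, (fun x => f (h x)). split; [exact HS|]. split.
    + repeat split; intros.
      * rewrite H0. apply F0.
      * rewrite H1. apply F1.
      * rewrite Hm by assumption. apply Fm; auto.
      * rewrite Hj by assumption. apply Fj; auto.
      * rewrite Hn by assumption. apply Fn; auto.
      * rewrite HJ by assumption. apply FJ; auto.
    + intros b. destruct (Hsurj b) as [a <-]. destruct (Hs a) as [x [Sx <-]].
      exists x; auto.
  - intros x. reflexivity.
  - exists (fun x y => f x = f y). split.
    + repeat split; intros; try congruence.
      * rewrite (Fm x y Logic.I Logic.I), (Fm x' y' Logic.I Logic.I). congruence.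
      * rewrite (Fj x y Logic.I Logic.I), (Fj x' y' Logic.I Logic.I). congruence.
      * rewrite (Fn x Logic.I), (Fn x' Logic.I). congruence.
      * rewrite (FJ x Logic.I), (FJ x' Logic.I). congruence.
    + exists f. split; [repeat split; assumption|]. split; [exact Hsurj|].
      intros; tauto.
Qed.

Theorem lemma4p12 (A : alg) (HA : in_V A) :
  (forall a : A, Oset A a <-> exists b : A, a = j2 A b) /\
  (forall a : A, Dset A a <-> exists b : A, a = meet A b (neg A b)) /\
  (exists HO : subuniverse A (Oset A), boolean_reduct (O_alg A HO)) /\
  (exists HD : D_closed A,
     is_semilattice (D_alg A HD) /\
     exists th : A -> A -> Prop,
       congruence A th /\ iso_to_quotient A (D_alg A HD) th).
Proof.
  destruct (in_V_rep HA) as (I & S & h & R).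
  assert (HO : subuniverse A (Oset A)).
  { unfold Oset. destruct (I5 R) as [e0 e1].
    repeat split; try assumption.
    - intros x y Hx Hy. rewrite <- Hx, <- Hy. apply (I6 R).
    - intros x y Hx Hy. rewrite <- Hx, <- Hy. apply (I6 R).
    - intros x Hx. rewrite <- Hx. apply (I6 R x x).
    - intros x Hx. rewrite Hx. exact Hx. }
  assert (HD : D_closed A).
  { unfold D_closed, Dset. destruct (I5 R) as [e0 e1].
    repeat split; try assumption.
    - intros x y Hx Hy. rewrite <- (part2 R Hx), <- (part2 R Hy). apply (ID R).
    - intros x y Hx Hy. rewrite <- (part2 R Hx), <- (part2 R Hy). apply (ID R).
    - intros x Hx. rewrite Hx. exact e0. }
  split; [|split; [|split]].
  - intros a. split; [intros Ha; exists a; now symmetry|].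
    intros [b ->]. apply (I1 R).
  - intros a. split; [intros Ha; exists a; symmetry; apply (part2 R Ha)|].
    intros [b ->]. apply (I4 R).
  - exists HO. destruct HO as [h0 [h1 [hm [hj [hn hJ]]]]]. simpl.
    intros [x px] [y py] [z pz]. unfold Oset in *.
    destruct (Ibool R x y z) as (e1 & e2 & e3 & e4 & e5 & e6 & e7 & e8 & e9 & e10 & e11 & e12).
    simpl in *. rewrite px, py, pz in *.
    repeat split; apply sig_eq; assumption.
  - exists HD. apply (partD R).
Qed.
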